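(* Let $Q$ be a finite set of item collections; for each $q\in Q$ let $n_q\ge 1$ be the number of items in $q$. On a probability space, let there be, for each $q\in Q$ and $i\in\{1,\ldots,n_q\}$, random variables: a feature vector $x_{q,i}$, a relevance indicator $r_{q,i}\in\{0,1\}$, an examination indicator $e_{q,i}\in\{0,1\}$, and a target (click) label $c_{q,i}\in\{0,1\}$. Let $\mathcal{I}_q=\{r_{q,1},\ldots,r_{q,n_q},x_{q,1},\ldots,x_{q,n_q}\}$ and define the conditional examination probabilities $$p_{q,i}=P\{e_{q,i}=1\mid \mathcal{I}_q\},\qquad p_{q,i,j}=P\{e_{q,i}e_{q,j}=1\mid \mathcal{I}_q\},\quad i,j\in\{1,\ldots,n_q\}.$$ Assume: (1) (examination hypothesis) $c_{q,i}=e_{q,i}\, r_{q,i}$ for all $q\in Q$ and all $i=1,\ldots,n_q$; (2) (positivity) $p_{q,i}>0$ and $p_{q,i,j}>0$ for all $q\in Q$ and all $i,j=1,\ldots,n_q$. Let $f$ be a (deterministic) ranking model mapping feature vectors to real scores, and let $\ell_{1,1},\ell_{1,0},\ell_{0,1},\ell_{0,0}$ be real-valued functions of two real scores. Set $$\mathbf{z}(u,v)=\big(\ell_{1,1}(u,v),\ \ell_{1,0}(u,v),\ \ell_{0,1}(u,v),\ \ell_{0,0}(u,v)\big)^{\mathsf T},\qquad \mathbf{s}(b_1,b_2)=\big(b_1b_2,\ b_1(1-b_2),\ (1-b_1)b_2,\ (1-b_1)(1-b_2)\big)^{\mathsf T}$$ for $b_1,b_2\in\{0,1\}$. With $a_{q,i}=1/p_{q,i}$,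 $a_{q,j}=1/p_{q,j}$, $a_{q,i,j}=1/p_{q,i,j}$, define the $4\times 4$ matrix $$\mathbf{A}_{q,i,j}=\begin{pmatrix} a_{q,i,j} & 0 & 0 & 0\\ a_{q,i}-a_{q,i,j} & a_{q,i} & 0 & 0\\ a_{q,j}-a_{q,i,j} & 0 & a_{q,j} & 0\\ 1-a_{q,i}-a_{q,j}+a_{q,i,j} & 1-a_{q,i} & 1-a_{q,j} & 1\end{pmatrix},$$ and the loss $$L_u=\sum_{q\in Q}\sum_{i,j=1}^{n_q}\mathbf{z}\big(f(x_{q,i}),f(x_{q,j})\big)^{\mathsf T}\,\mathbf{A}_{q,i,j}\,\mathbf{s}(c_{q,i},c_{q,j}).$$ Then $L_u$ is unbiased, i.e. $$\mathrm{E}[L_u]=\mathrm{E}\left[\sum_{q\in Q}\sum_{i,j=1}^{n_q}\mathbf{z}\big(f(x_{q,i}),f(x_{q,j})\big)^{\mathsf T}\,\mathbf{s}(r_{q,i},r_{q,j})\right].$$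
   Context: This is the setting of pairwise learning-to-rank with position bias: $r_{q,i}$ is the (unobserved) true relevance of the $i$-th item of collection $q$, $e_{q,i}$ indicates whether the user examined it, and $c_{q,i}$ is the observed implicit-feedback label (e.g. a click). The examination indicators of different items need not be independent, and examination need not be independent of relevance. All expectations appearing in the statement are assumed to exist (be finite). *)

(* Defs.v *)
From HB Require Import structures.
From mathcomp Require Import all_boot all_order all_algebra.
From mathcomp Require Import all_classical all_reals all_analysis.
Set Implicit Arguments. Unset Strict Implicit. Unset Printing Implicit Defensive.
Import Order.TTheory GRing.Theory Num.Theory.
Local Open Scope classical_set_scope.
Local Open Scope ring_scope.

Definition zvec (R : realType) (l11 l10 l01 l00 : R -> R -> R) (u v : R)
  : 'cV[R]_4 :=
  \col_(k < 4) match nat_of_ord k with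
               | 0 => l11 u v | 1 => l10 u v | 2 => l01 u v | _ => l00 u v end.

Definition svec (R : realType) (b1 b2 : R) : 'cV[R]_4 :=
  \col_(k < 4) match nat_of_ord k with
               | 0 => b1 * b2 | 1 => b1 * (1 - b2)
               | 2 => (1 - b1) * b2 | _ => (1 - b1) * (1 - b2) end.

Definition Amx (R : realType) (ai aj aij : R) : 'M[R]_4 :=
  \matrix_(k < 4, l < 4)
    match nat_of_ord k, nat_of_ord l with
    | 0, 0 => aij
    | 1, 0 => ai - aij | 1, 1 => ai
    | 2, 0 => aj - aij | 2, 2 => aj
    | 3, 0 => 1 - ai - aj + aij | 3, 1 => 1 - ai | 3, 2 => 1 - aj | 3, 3 => 1
    | _, _ => 0
    end.

Definition quadform (R : realType) (z : 'cV[R]_4) (M : 'M[R]_4) (s : 'cV[R]_4)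
  : R := ((z^T *m M *m s) ord0 ord0).

(* generating family of I_q = {r_{q,1..n}, x_{q,1..n}}: preimages of
   measurable sets under the r_{q,i} and the x_{q,i} *)
Definition info_gen d dX (Omega : measurableType d) (X : measurableType dX)
  (R : realType) (n : nat) (r : 'I_n -> Omega -> R) (x : 'I_n -> Omega -> X)
  : set (set Omega) :=
  [set A | exists i : 'I_n,
     (exists B : set R, measurable B /\ A = r i @^-1` B) \/
     (exists B : set X, measurable B /\ A = x i @^-1` B)].

Definition info_sigma d dX (Omega : measurableType d) (X : measurableType dX)
  (R : realType) (n : nat) (r : 'I_n -> Omega -> R) (x : 'I_n -> Omega -> X)
  : set (set Omega) := <<s info_gen r x >>.

(* p is a version of the conditional expectation E[Y | G] (G a sub-sigma-algebra
   given as a set system): p is G-measurable, integrable, and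
   \int_A Y = \int_A p for every A in G. *)
Definition is_cond_exp d (Omega : measurableType d) (R : realType)
  (P : probability Omega R) (G : set (set Omega)) (Y p : Omega -> R) : Prop :=
  (forall B : set R, measurable B -> G (p @^-1` B)) /\
  P.-integrable setT (EFin \o p) /\
  (forall A, G A ->
     (\int[P]_(w in A) (Y w)%:E = \int[P]_(w in A) (p w)%:E)%E).

Definition dotc (R : realType) (z s : 'cV[R]_4) : R := ((z^T *m s) ord0 ord0).

(* Main.v *)
Require Import Defs.
From HB Require Import structures.
From mathcomp Require Import all_boot all_order all_algebra.
From mathcomp Require Import all_classical all_reals all_analysis.
From mathcomp Require Import measurable_realfun.
From mathcomp Require Import ring lra.
Import Order.TTheory GRing.Theory Num.Theory.
Local Open Scope classical_set_scope.
Local Open Scope ring_scope.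

Definition ppart {R : realType} (x : R) := (x + `|x|) / 2.
Definition npart {R : realType} (x : R) := (`|x| - x) / 2.
Lemma pn_sub (R : realType) (x : R) : ppart x - npart x = x.
Proof. rewrite /ppart /npart; lra. Qed.
Lemma pn_add (R : realType) (x : R) : ppart x + npart x = `|x|.
Proof. rewrite /ppart /npart; lra. Qed.
Lemma ppart_ge0 (R : realType) (x : R) : 0 <= ppart x.
Proof. rewrite /ppart divr_ge0 //; have := ler_norm (- x); rewrite normrN; lra. Qed.
Lemma npart_ge0 (R : realType) (x : R) : 0 <= npart x.
Proof. rewrite /npart divr_ge0 //; have := ler_norm x; lra. Qed.
Lemma ppart_id (R : realType) (x : R) : 0 <= x -> ppart x = x.
Proof. move=> hx; rewrite /ppart ger0_norm //; lra. Qed.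
Lemma ppart_le (R : realType) (x : R) : `|ppart x| <= `|x|.
Proof. rewrite ger0_norm ?ppart_ge0 // -pn_add lerDl npart_ge0 //. Qed.
Lemma npart_le (R : realType) (x : R) : `|npart x| <= `|x|.
Proof. rewrite ger0_norm ?npart_ge0 // -pn_add lerDr ppart_ge0 //. Qed.

Lemma measurable_ppart d (T : measurableType d) (R : realType) (D : set T) (h : T -> R) :
  measurable_fun D h -> measurable_fun D (fun w => ppart (h w)).
Proof.
move=> mh; rewrite /ppart; apply: measurable_funM => //.
apply: measurable_funD => //; exact: measurableT_comp.
Qed.
Arguments measurable_ppart {d T R D h}.
Lemma measurable_npart d (T : measurableType d) (R : realType) (D : set T) (h : T -> R) :
  measurable_fun D h -> measurable_fun D (fun w => npart (h w)).
Proof.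
move=> mh; rewrite /npart; apply: measurable_funM => //.
apply: measurable_funB => //; exact: measurableT_comp.
Qed.
Arguments measurable_npart {d T R D h}.


Definition qf {R : realType} (l11 l10 l01 l00 ai aj aij ci cj : R) : R :=
  l11 * (aij * ci * cj) + l10 * (ai * ci - aij * ci * cj)
  + l01 * (aj * cj - aij * ci * cj) + l00 * (1 - ai * ci - aj * cj + aij * ci * cj).
Definition dt {R : realType} (l11 l10 l01 l00 ri rj : R) : R :=
  l11 * (ri * rj) + l10 * (ri * (1 - rj)) + l01 * ((1 - ri) * rj)
  + l00 * ((1 - ri) * (1 - rj)).

Lemma quadformE (R : realType) (l11 l10 l01 l00 : R -> R -> R) u v ai aj aij ci cj :
  quadform (zvec l11 l10 l01 l00 u v) (Amx ai aj aij) (svec ci cj) =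
  qf (l11 u v) (l10 u v) (l01 u v) (l00 u v) ai aj aij ci cj.
Proof.
rewrite /quadform /qf !mxE !big_ord_recl big_ord0.
rewrite !mxE !big_ord_recl !big_ord0 /= !mxE /=.
ring.
Qed.

Lemma dotcE (R : realType) (l11 l10 l01 l00 : R -> R -> R) u v ri rj :
  dotc (zvec l11 l10 l01 l00 u v) (svec ri rj) =
  dt (l11 u v) (l10 u v) (l01 u v) (l00 u v) ri rj.
Proof.
rewrite /dotc /dt !mxE !big_ord_recl big_ord0 /= !mxE /=.
ring.
Qed.

Lemma measurable_inv (R : realType) : measurable_fun [set: R] (@GRing.inv R).
Proof.
rewrite -(setUv [set 0%R]).
apply/measurable_funU => //; first exact: measurableC.
split; first exact: measurable_fun_set1.
apply: open_continuous_measurable_fun.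
  apply: closed_openC; apply: accessible_closed_set1.
  apply: hausdorff_accessible; exact: Rhausdorff.
move=> x /set_mem /= x0; apply: inv_continuous; exact/eqP.
Qed.

Section Int.
Context (R : realType) d (Omega : measurableType d) (P : probability Omega R).
Local Open Scope ereal_scope.
Lemma integral4 (f1 f2 f3 f4 : Omega -> R) :
  P.-integrable setT (EFin \o f1) -> P.-integrable setT (EFin \o f2) ->
  P.-integrable setT (EFin \o f3) -> P.-integrable setT (EFin \o f4) ->
  \int[P]_w (f1 w + f2 w + f3 w + f4 w)%:E =
  \int[P]_w (f1 w)%:E + \int[P]_w (f2 w)%:E + \int[P]_w (f3 w)%:E + \int[P]_w (f4 w)%:E.
Proof.
move=> i1 i2 i3 i4.
under eq_integral do rewrite !EFinD.
rewrite integralD //; last by apply: integrableD => //; exact: integrableD.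
rewrite integralD //; last exact: integrableD.
by rewrite integralD.
Qed.

Lemma bnd_int (W : Omega -> R) : measurable_fun setT W ->
  (forall w, (0 <= W w <= 1)%R) -> P.-integrable setT (EFin \o W).
Proof.
move=> mW W01; apply: (le_integrable _ _ _ (finite_measure_integrable_cst P 1 measurableT)) => //.
  exact/measurable_EFinP.
move=> w _ /=; rewrite lee_fin ger0_norm ?normr1; case/andP: (W01 w) => //.
Qed.
End Int.

Lemma measurable_qf d (T : measurableType d) (R : realType) (D : set T)
  (a1 a2 a3 a4 a5 a6 a7 a8 a9 : T -> R) :
  measurable_fun D a1 -> measurable_fun D a2 -> measurable_fun D a3 ->
  measurable_fun D a4 -> measurable_fun D a5 -> measurable_fun D a6 ->
  measurable_fun D a7 -> measurable_fun D a8 -> measurable_fun D a9 ->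
  measurable_fun D (fun w => qf (a1 w) (a2 w) (a3 w) (a4 w) (a5 w) (a6 w)
                                (a7 w) (a8 w) (a9 w)).
Proof.
move=> m1 m2 m3 m4 m5 m6 m7 m8 m9; rewrite /qf.
repeat first [ apply: measurable_funD | apply: measurable_funB
             | apply: measurable_funM | apply: measurable_funN | eassumption | exact: measurable_cst ].
Qed.

Lemma measurable_dt d (T : measurableType d) (R : realType) (D : set T)
  (a1 a2 a3 a4 a5 a6 : T -> R) :
  measurable_fun D a1 -> measurable_fun D a2 -> measurable_fun D a3 ->
  measurable_fun D a4 -> measurable_fun D a5 -> measurable_fun D a6 ->
  measurable_fun D (fun w => dt (a1 w) (a2 w) (a3 w) (a4 w) (a5 w) (a6 w)).
Proof.
move=> m1 m2 m3 m4 m5 m6; rewrite /dt.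
repeat first [ apply: measurable_funD | apply: measurable_funB
             | apply: measurable_funM | apply: measurable_funN | eassumption | exact: measurable_cst ].
Qed.

Lemma alg_id (R : realType) (l11 l10 l01 l00 ri rj pi pj pij : R) :
  pi != 0 -> pj != 0 -> pij != 0 ->
  qf l11 l10 l01 l00 pi^-1 pj^-1 pij^-1 (1 * ri) (1 * rj) * pij
  + qf l11 l10 l01 l00 pi^-1 pj^-1 pij^-1 (1 * ri) (0 * rj) * (pi - pij)
  + qf l11 l10 l01 l00 pi^-1 pj^-1 pij^-1 (0 * ri) (1 * rj) * (pj - pij)
  + qf l11 l10 l01 l00 pi^-1 pj^-1 pij^-1 (0 * ri) (0 * rj) * (1 - pi - pj + pij)
  = dt l11 l10 l01 l00 ri rj.
Proof. move=> h1 h2 h3; rewrite /qf /dt; field; by rewrite h1 h2 h3. Qed.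
Lemma dec_id (R : realType) (l11 l10 l01 l00 ai aj aij ei ej ri rj : R) :
  qf l11 l10 l01 l00 ai aj aij (ei * ri) (ej * rj) =
  qf l11 l10 l01 l00 ai aj aij (1 * ri) (1 * rj) * (ei * ej)
  + qf l11 l10 l01 l00 ai aj aij (1 * ri) (0 * rj) * (ei - ei * ej)
  + qf l11 l10 l01 l00 ai aj aij (0 * ri) (1 * rj) * (ej - ei * ej)
  + qf l11 l10 l01 l00 ai aj aij (0 * ri) (0 * rj) * (1 - ei - ej + ei * ej).
Proof. rewrite /qf; ring. Qed.

Section Key.
Context (R : realType) d (Omega : measurableType d) (P : probability Omega R)
  (gen : set (set Omega)).
Hypothesis gen_meas : gen `<=` d.-measurable.
Local Notation T' := (g_sigma_algebraType gen).

Lemma Gsub : <<s gen>> `<=` d.-measurable.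
Proof. apply: smallest_sub => //; exact: sigma_algebra_measurable. Qed.

Lemma GtoO d' (U : measurableType d') (h : Omega -> U) :
  measurable_fun [set: T'] (h : T' -> U) -> measurable_fun [set: Omega] h.
Proof.
move=> mh _ B mB; rewrite setTI; apply: Gsub.
have := mh measurableT B mB; rewrite setTI; exact.
Qed.
Arguments GtoO {d' U h}.

Local Open Scope ereal_scope.
Import HBNNSimple.

Lemma sfun_step (t : {nnsfun T' >-> R}) (F : Omega -> R) :
  measurable_fun [set: Omega] F -> (forall w, (0 <= F w)%R) ->
  \int[P]_w (t w * F w)%:E = \sum_(y \in range t)
     (y%:E * \int[P]_(w in (t @^-1` [set y] : set Omega)) (F w)%:E).
Proof.
move=> mF F0.
have mA y : d.-measurable (t @^-1` [set y] : set Omega).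
  apply: Gsub; have := measurable_funP t measurableT [set y] (measurable_set1 y).
  by rewrite setTI.
under eq_integral do rewrite (fimfunE t) mulr_fsuml -fsumEFin//.
rewrite ge0_integral_fsum//; last 2 first.
- move=> y; apply/measurable_EFinP; apply: measurable_funM => //.
  apply: measurable_funM => //; exact/measurable_indic.
- move=> y w _; rewrite lee_fin; apply: mulr_ge0 => //.
  rewrite indicE; case: (boolP (w \in _)) => [/set_mem <-|_].
    by rewrite mulr1; exact: fun_ge0.
  by rewrite mulr0.
apply: eq_fsbigr => y yr.
have y0 : (0 <= y)%R by move: yr => /set_mem [w _ <-]; exact: fun_ge0.
under eq_integral do rewrite -mulrA EFinM.
rewrite ge0_integralZl_EFin //; last 2 first.
- by move=> w _; rewrite lee_fin mulr_ge0 // indicE.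
- apply/measurable_EFinP; apply: measurable_funM => //; exact/measurable_indic.
congr (_ * _); rewrite [RHS]integral_mkcond; apply: eq_integral => w _.
by rewrite patchE indicE; case: (w \in _) => /=; rewrite ?mul1r ?mul0r.
Qed.

Lemma key_ge0 (W pw : Omega -> R) :
  measurable_fun [set: Omega] W -> (forall w, (0 <= W w)%R) ->
  measurable_fun [set: T'] (pw : T' -> R) -> (forall w, (0 <= pw w)%R) ->
  (forall A, <<s gen>> A ->
     \int[P]_(w in A) (W w)%:E = \int[P]_(w in A) (pw w)%:E) ->
  forall h : Omega -> R, measurable_fun [set: T'] (h : T' -> R) ->
  (forall w, (0 <= h w)%R) ->
  \int[P]_w (h w * W w)%:E = \int[P]_w (h w * pw w)%:E.
Proof.
move=> mW W0 mpw pw0 HA h mh h0.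
have mh' : measurable_fun [set: T'] (EFin \o (h : T' -> R)).
  exact/measurable_EFinP.
pose s := nnsfun_approx (D := [set: T']) measurableT mh'.
have Hlim (F : Omega -> R) : measurable_fun [set: Omega] F -> (forall w, (0 <= F w)%R) ->
  \int[P]_w (h w * F w)%:E = limn (fun n => \int[P]_w (s n w * F w)%:E).
  move=> mF F0.
  rewrite -monotone_convergence //; last 3 first.
  - move=> k; apply/measurable_EFinP; apply: measurable_funM => //.
    apply: GtoO; exact: measurable_funP.
  - by move=> k w _; rewrite lee_fin mulr_ge0.
  - move=> w _ a b ab; rewrite lee_fin ler_wpM2r //.
    have := @nd_nnsfun_approx _ _ _ _ measurableT _ mh' a b ab.
    move/lefP; exact.
  apply: eq_integral => w _; apply/esym/cvg_lim => //.
  rewrite EFinM; under eq_fun do rewrite EFinM.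
  apply: cvgeZr => //.
  have := @cvg_nnsfun_approx _ _ _ _ measurableT _ mh' (fun w _ => h0 w) w I.
  exact.
rewrite (Hlim W) // (Hlim pw) //; last exact: GtoO.
congr (limn _); apply/funext => k.
rewrite !sfun_step //; last exact: GtoO.
apply: eq_fsbigr => y _; congr (_ * _); apply: HA.
have := measurable_funP (s k) measurableT [set y] (measurable_set1 y).
by rewrite setTI.
Qed.
Lemma pw_ae_ge0 (W pw : Omega -> R) :
  measurable_fun [set: Omega] W -> (forall w, (0 <= W w)%R) ->
  measurable_fun [set: T'] (pw : T' -> R) ->
  P.-integrable setT (EFin \o pw) ->
  (forall A, <<s gen>> A ->
     \int[P]_(w in A) (W w)%:E = \int[P]_(w in A) (pw w)%:E) ->
  {ae P, forall w, (0 <= pw w)%R}.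
Proof.
move=> mW W0 mpw ipw HA.
pose N := pw @^-1` [set` `]-oo, 0[%R].
have GN : <<s gen>> N.
  have := mpw measurableT _ (measurable_itv `]-oo, 0[%R); rewrite setTI; exact.
have mN : d.-measurable N by exact: Gsub.
have mpwO := GtoO mpw.
have H1 : \int[P]_(w in N) `|(pw w)%:E| = - \int[P]_(w in N) (pw w)%:E.
  transitivity (\int[P]_(w in N) ((-1)%:E * (pw w)%:E)).
    apply: eq_integral => w; rewrite inE /N /= in_itv /= => wN.
    by rewrite ltr0_norm // -EFinM mulN1r.
  rewrite integralZl //; last by apply: integrableS ipw.
  by rewrite mulN1e.
have H2 : 0 <= \int[P]_(w in N) (W w)%:E.
  by apply: integral_ge0 => w _; rewrite lee_fin.
have H3 : \int[P]_(w in N) `|(pw w)%:E| = 0.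
  apply/eqP; rewrite eq_le; apply/andP; split; last first.
    by apply: integral_ge0 => w _; exact: abse_ge0.
  by rewrite H1 -HA // oppe_le0.
have mpwN : measurable_fun N (EFin \o pw).
  by apply/measurable_EFinP; exact: measurable_funS mpwO.
have Hae := (ae_eq_integral_abs P mN mpwN).1 H3.
apply: filterS Hae => w Hw; rewrite leNgt; apply/negP => neg.
have : N w by rewrite /N /= in_itv.
by move/Hw => /= [] pw0; move: neg; rewrite pw0 ltxx.
Qed.

Lemma key (W pw : Omega -> R) :
  measurable_fun [set: Omega] W -> (forall w, (0 <= W w)%R) ->
  measurable_fun [set: T'] (pw : T' -> R) ->
  P.-integrable setT (EFin \o pw) ->
  (forall A, <<s gen>> A ->
     \int[P]_(w in A) (W w)%:E = \int[P]_(w in A) (pw w)%:E) ->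
  forall h : Omega -> R, measurable_fun [set: T'] (h : T' -> R) ->
  P.-integrable setT (fun w => (h w * W w)%:E) ->
  P.-integrable setT (fun w => (h w * pw w)%:E) /\
  \int[P]_w (h w * W w)%:E = \int[P]_w (h w * pw w)%:E.
Proof.
move=> mW W0 mpw ipw HA h mh ihW.
have mpwO := GtoO mpw; have mhO := GtoO mh.
have ae0 := @pw_ae_ge0 W pw mW W0 mpw ipw HA.
pose pw' := fun w => ppart (pw w).
have mpw' : measurable_fun [set: T'] (pw' : T' -> R) by exact: measurable_ppart.
have mpw'O := GtoO mpw'.
have aeq : {ae P, forall w, pw w = pw' w}.
  by apply: filterS ae0 => w /ppart_id; rewrite /pw' => ->.
have HA' : forall A, <<s gen>> A ->
    \int[P]_(w in A) (W w)%:E = \int[P]_(w in A) (pw' w)%:E.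
  move=> A GA; rewrite HA //; apply: ae_eq_integral.
  - exact: Gsub.
  - apply/measurable_EFinP; apply: measurable_funS mpwO => //; exact: Gsub.
  - apply/measurable_EFinP; apply: measurable_funS mpw'O => //; exact: Gsub.
  - by apply: filterS aeq => w -> _.
have K (g : Omega -> R) : measurable_fun [set: T'] (g : T' -> R) ->
    (forall w, (0 <= g w)%R) ->
    \int[P]_w (g w * W w)%:E = \int[P]_w (g w * pw' w)%:E.
  move=> mg g0; apply: key_ge0 => //.
  by move=> w; exact: ppart_ge0.
have K2 (g : Omega -> R) : measurable_fun [set: Omega] g ->
    \int[P]_w (g w * pw' w)%:E = \int[P]_w (g w * pw w)%:E.
  move=> mg; apply: ae_eq_integral => //.
  - by apply/measurable_EFinP; exact: measurable_funM.
  - by apply/measurable_EFinP; exact: measurable_funM.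
  - by apply: filterS aeq => w -> _.
have ihpw : P.-integrable setT (fun w => (h w * pw w)%:E).
  apply/integrableP; split.
    by apply/measurable_EFinP; exact: measurable_funM.
  have E1 : \int[P]_w `|(h w * pw w)%:E| = \int[P]_w ((`|h w| * pw' w)%:E).
    apply: ae_eq_integral => //.
    - apply: measurableT_comp => //; apply/measurable_EFinP.
      exact: measurable_funM.
    - apply/measurable_EFinP; apply: measurable_funM => //.
      exact: measurableT_comp.
    - apply: filterS aeq => w hw _ /=; rewrite normrM -hw.
      by rewrite (ger0_norm (x := pw w)) // hw ppart_ge0.
  rewrite E1 -K; last 2 first.
  - exact: measurableT_comp.
  - by move=> w; exact: normr_ge0.
  have -> : \int[P]_w (`|h w| * W w)%:E = \int[P]_w `|(h w * W w)%:E|.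
    by apply: eq_integral => w _; rewrite /= normrM (ger0_norm (W0 w)).
  by case/integrableP: ihW.
split => //.
have hdec (F : Omega -> R) : (fun w => (h w * F w)%:E) =
    (fun w => (ppart (h w) * F w)%:E - (npart (h w) * F w)%:E).
  by apply/funext => w; rewrite -EFinB -mulrBl pn_sub.
have ile (F g : Omega -> R) : (forall w, (`|g w| <= `|h w|)%R) ->
    measurable_fun [set: Omega] g -> measurable_fun [set: Omega] F ->
    P.-integrable setT (fun w => (h w * F w)%:E) ->
    P.-integrable setT (fun w => (g w * F w)%:E).
  move=> gle mg mF ihF; apply: le_integrable ihF => //.
    by apply/measurable_EFinP; exact: measurable_funM.
  by move=> w _; rewrite /= lee_fin !normrM ler_wpM2r.
have mpO := measurable_ppart mhO; have mnO := measurable_npart mhO.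
rewrite (hdec W) (hdec pw) integralB //; first last.
- by apply: ile => // w; exact: npart_le.
- by apply: ile => // w; exact: ppart_le.
rewrite integralB //; first last.
- by apply: ile => // w; exact: npart_le.
- by apply: ile => // w; exact: ppart_le.
rewrite K; [|exact: measurable_ppart|by move=> w; exact: ppart_ge0].
rewrite [X in _ - X = _]K; [|exact: measurable_npart|by move=> w; exact: npart_ge0].
by rewrite !K2.
Qed.

Definition CE (W p : Omega -> R) : Prop :=
  [/\ P.-integrable setT (EFin \o W), P.-integrable setT (EFin \o p) &
   forall A, <<s gen>> A ->
     \int[P]_(w in A) (W w)%:E = \int[P]_(w in A) (p w)%:E].

Lemma CE_add W1 p1 W2 p2 : CE W1 p1 -> CE W2 p2 ->
  CE (fun w => W1 w + W2 w)%R (fun w => p1 w + p2 w)%R.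
Proof.
case=> iW1 ip1 H1 [iW2 ip2 H2]; split.
- have -> : EFin \o (fun w => W1 w + W2 w)%R = (EFin \o W1) \+ (EFin \o W2).
    by apply/funext => w /=; rewrite EFinD.
  exact: integrableD.
- have -> : EFin \o (fun w => p1 w + p2 w)%R = (EFin \o p1) \+ (EFin \o p2).
    by apply/funext => w /=; rewrite EFinD.
  exact: integrableD.
move=> A GA; have mA : d.-measurable A by exact: Gsub.
have iS (g : Omega -> R) : P.-integrable setT (EFin \o g) ->
    P.-integrable A (EFin \o g).
  by move=> ig; apply: integrableS ig.
under eq_integral do rewrite EFinD.
rewrite integralD //; [|exact: iS|exact: iS].
under [RHS]eq_integral do rewrite EFinD.
rewrite integralD //; [|exact: iS|exact: iS].
by rewrite H1 // H2.
Qed.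

Lemma CE_sub W1 p1 W2 p2 : CE W1 p1 -> CE W2 p2 ->
  CE (fun w => W1 w - W2 w)%R (fun w => p1 w - p2 w)%R.
Proof.
case=> iW1 ip1 H1 [iW2 ip2 H2]; split.
- have -> : EFin \o (fun w => W1 w - W2 w)%R = (EFin \o W1) \- (EFin \o W2).
    by apply/funext => w /=; rewrite EFinB.
  exact: integrableB.
- have -> : EFin \o (fun w => p1 w - p2 w)%R = (EFin \o p1) \- (EFin \o p2).
    by apply/funext => w /=; rewrite EFinB.
  exact: integrableB.
move=> A GA; have mA : d.-measurable A by exact: Gsub.
have iS (g : Omega -> R) : P.-integrable setT (EFin \o g) ->
    P.-integrable A (EFin \o g).
  by move=> ig; apply: integrableS ig.
under eq_integral do rewrite EFinB.
rewrite (integralB mA (f1 := EFin \o W1) (f2 := EFin \o W2)); [|exact: iS|exact: iS].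
under [RHS]eq_integral do rewrite EFinB.
rewrite (integralB mA (f1 := EFin \o p1) (f2 := EFin \o p2)); [|exact: iS|exact: iS].
by rewrite H1 // H2.
Qed.

Arguments CE_add {W1 p1 W2 p2}.
Arguments CE_sub {W1 p1 W2 p2}.
Lemma CE_one : CE (fun=> 1%R) (fun=> 1%R).
Proof.
split => //; exact: (finite_measure_integrable_cst P 1 measurableT).
Qed.

Lemma term (ei ej ri rj pi pj pij L11 L10 L01 L00 : Omega -> R) :
  measurable_fun [set: Omega] ei -> measurable_fun [set: Omega] ej ->
  (forall w, ei w = 0 \/ ei w = 1)%R -> (forall w, ej w = 0 \/ ej w = 1)%R ->
  measurable_fun [set: T'] (ri : T' -> R) -> measurable_fun [set: T'] (rj : T' -> R) ->
  measurable_fun [set: T'] (L11 : T' -> R) -> measurable_fun [set: T'] (L10 : T' -> R) ->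
  measurable_fun [set: T'] (L01 : T' -> R) -> measurable_fun [set: T'] (L00 : T' -> R) ->
  measurable_fun [set: T'] (pi : T' -> R) -> measurable_fun [set: T'] (pj : T' -> R) ->
  measurable_fun [set: T'] (pij : T' -> R) ->
  CE ei pi -> CE ej pj -> CE (fun w => ei w * ej w)%R pij ->
  {ae P, forall w, 0 < pi w}%R -> {ae P, forall w, 0 < pj w}%R ->
  {ae P, forall w, 0 < pij w}%R ->
  P.-integrable setT (fun w => (qf (L11 w) (L10 w) (L01 w) (L00 w)
      (pi w)^-1 (pj w)^-1 (pij w)^-1 (ei w * ri w) (ej w * rj w))%:E) ->
  \int[P]_w (qf (L11 w) (L10 w) (L01 w) (L00 w)
      (pi w)^-1 (pj w)^-1 (pij w)^-1 (ei w * ri w) (ej w * rj w))%:E =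
  \int[P]_w (dt (L11 w) (L10 w) (L01 w) (L00 w) (ri w) (rj w))%:E.
Proof.
move=> mei mej ei01 ej01 mri mrj m11 m10 m01 m00 mpi mpj mpij Ci Cj Cij pi0 pj0 pij0 iY.
set Y := fun w => qf (L11 w) (L10 w) (L01 w) (L00 w)
      (pi w)^-1 (pj w)^-1 (pij w)^-1 (ei w * ri w) (ej w * rj w).
pose phi (b1 b2 : R) := fun w => qf (L11 w) (L10 w) (L01 w) (L00 w)
      (pi w)^-1 (pj w)^-1 (pij w)^-1 (b1 * ri w) (b2 * rj w).
have minv (g : T' -> R) : measurable_fun [set: T'] g ->
    measurable_fun [set: T'] (fun w => (g w)^-1)%R.
  by move=> mg; apply: measurableT_comp => //; exact: measurable_inv.
have mphi b1 b2 : measurable_fun [set: T'] (phi b1 b2 : T' -> R).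
  by apply: measurable_qf => //; try exact: minv; apply: measurable_funM.
have mYO : measurable_fun [set: Omega] Y.
  apply: measurable_qf; try exact: GtoO; try (apply: GtoO; exact: minv);
    apply: measurable_funM => //; exact: GtoO.
have step (W Pw : Omega -> R) (b1 b2 : R) : measurable_fun [set: Omega] W ->
    (forall w, 0 <= W w <= 1)%R -> measurable_fun [set: T'] (Pw : T' -> R) ->
    CE W Pw -> (forall w, W w * Y w = W w * phi b1 b2 w)%R ->
    [/\ P.-integrable setT (EFin \o (fun w => phi b1 b2 w * W w)%R),
        P.-integrable setT (EFin \o (fun w => phi b1 b2 w * Pw w)%R) &
     \int[P]_w (phi b1 b2 w * W w)%:E = \int[P]_w (phi b1 b2 w * Pw w)%:E].
  move=> mW W01 mPw [iW iPw HA] WY.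
  have iphiW : P.-integrable setT (fun w => (phi b1 b2 w * W w)%:E).
    apply: le_integrable iY => //.
      by apply/measurable_EFinP; apply: measurable_funM => //; exact: GtoO.
    move=> w _; rewrite /= lee_fin mulrC -WY normrM.
    by case/andP: (W01 w) => W0 W1; rewrite ler_piMl // ger0_norm.
  have [] := @key W Pw mW (fun w => proj1 (andP (W01 w))) mPw iPw HA _ (mphi b1 b2) iphiW.
  by [].
have C10 : CE (fun w => ei w - ei w * ej w)%R (fun w => pi w - pij w)%R.
  exact: CE_sub Ci Cij.
have C01 : CE (fun w => ej w - ei w * ej w)%R (fun w => pj w - pij w)%R.
  exact: CE_sub Cj Cij.
have C00 : CE (fun w => 1 - ei w - ej w + ei w * ej w)%R
              (fun w => 1 - pi w - pj w + pij w)%R.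
  exact: CE_add (CE_sub (CE_sub CE_one Ci) Cj) Cij.
have mpiO := GtoO mpi; have mpjO := GtoO mpj; have mpijO := GtoO mpij.
have b11 : forall w, (0 <= ei w * ej w <= 1)%R.
  by move=> w; case: (ei01 w) => ->; case: (ej01 w) => ->; rewrite ?mul0r ?mul1r ?lexx ?ler01.
have b10 : forall w, (0 <= ei w - ei w * ej w <= 1)%R.
  by move=> w; case: (ei01 w) => ->; case: (ej01 w) => ->;
    rewrite ?mul0r ?mul1r ?subrr ?subr0 ?lexx ?ler01.
have b01 : forall w, (0 <= ej w - ei w * ej w <= 1)%R.
  by move=> w; case: (ei01 w) => ->; case: (ej01 w) => ->;
    rewrite ?mul0r ?mul1r ?subrr ?subr0 ?lexx ?ler01.
have b00 : forall w, (0 <= 1 - ei w - ej w + ei w * ej w <= 1)%R.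
  move=> w; case: (ei01 w) => ->; case: (ej01 w) => ->; apply/andP; split; lra.
have y11 : forall w, ((ei w * ej w) * Y w = (ei w * ej w) * phi 1 1 w)%R.
  by move=> w; rewrite /Y /phi; case: (ei01 w) => ->; case: (ej01 w) => ->; ring.
have y10 : forall w, ((ei w - ei w * ej w) * Y w = (ei w - ei w * ej w) * phi 1 0 w)%R.
  by move=> w; rewrite /Y /phi; case: (ei01 w) => ->; case: (ej01 w) => ->; ring.
have y01 : forall w, ((ej w - ei w * ej w) * Y w = (ej w - ei w * ej w) * phi 0 1 w)%R.
  by move=> w; rewrite /Y /phi; case: (ei01 w) => ->; case: (ej01 w) => ->; ring.
have y00 : forall w, ((1 - ei w - ej w + ei w * ej w) * Y w =
    (1 - ei w - ej w + ei w * ej w) * phi 0 0 w)%R.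
  by move=> w; rewrite /Y /phi; case: (ei01 w) => ->; case: (ej01 w) => ->; ring.
have mW11 : measurable_fun [set: Omega] (fun w => ei w * ej w)%R.
  exact: measurable_funM.
have mW10 : measurable_fun [set: Omega] (fun w => ei w - ei w * ej w)%R.
  by apply: measurable_funB => //; exact: measurable_funM.
have mW01 : measurable_fun [set: Omega] (fun w => ej w - ei w * ej w)%R.
  by apply: measurable_funB => //; exact: measurable_funM.
have mW00 : measurable_fun [set: Omega] (fun w => 1 - ei w - ej w + ei w * ej w)%R.
  apply: measurable_funD => //.
  by apply: measurable_funB => //; apply: measurable_funB.
have mP10 : measurable_fun [set: T'] ((fun w => pi w - pij w)%R : T' -> R).
  exact: measurable_funB.
have mP01 : measurable_fun [set: T'] ((fun w => pj w - pij w)%R : T' -> R).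
  exact: measurable_funB.
have mP00 : measurable_fun [set: T'] ((fun w => 1 - pi w - pj w + pij w)%R : T' -> R).
  apply: measurable_funD => //.
  by apply: measurable_funB => //; apply: measurable_funB.
have [i11 j11 E11] := step _ _ 1%R 1%R mW11 b11 mpij Cij y11.
have [i10 j10 E10] := step _ _ 1%R 0%R mW10 b10 mP10 C10 y10.
have [i01 j01 E01] := step _ _ 0%R 1%R mW01 b01 mP01 C01 y01.
have [i00 j00 E00] := step _ _ 0%R 0%R mW00 b00 mP00 C00 y00.
have -> : \int[P]_w (Y w)%:E =
  \int[P]_w (phi 1 1 w * (ei w * ej w))%:E
  + \int[P]_w (phi 1 0 w * (ei w - ei w * ej w))%:E
  + \int[P]_w (phi 0 1 w * (ej w - ei w * ej w))%:E
  + \int[P]_w (phi 0 0 w * (1 - ei w - ej w + ei w * ej w))%:E.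
  rewrite -integral4 //; apply: eq_integral => w _; rewrite /Y /phi.
  by rewrite dec_id.
rewrite E11 E10 E01 E00 -integral4 //.
apply: ae_eq_integral => //.
- apply/measurable_EFinP.
  repeat apply: measurable_funD; apply: measurable_funM => //;
    try exact: GtoO; repeat first [apply: measurable_funD | apply: measurable_funB
      | exact: measurable_cst | eassumption].
- apply/measurable_EFinP; apply: measurable_dt; exact: GtoO.
apply: (@filterS3 _ _ _ _ _ _ _ _ pi0 pj0 pij0) => w h1 h2 h3 _.
rewrite /phi /=; congr (_%:E).
by rewrite alg_id // ?gt_eqF.
Qed.

End Key.

Lemma integral_sum3 (R : realType) d (Omega : measurableType d) (P : probability Omega R)
  (Q : finType) (n : Q -> nat) (F : forall q : Q, 'I_(n q) -> 'I_(n q) -> Omega -> R) :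
  (forall q i j, P.-integrable setT (fun w => (F q i j w)%:E)) ->
  (\int[P]_w (\sum_(q : Q) \sum_(i < n q) \sum_(j < n q) F q i j w)%:E =
   \sum_(q : Q) \sum_(i < n q) \sum_(j < n q) \int[P]_w (F q i j w)%:E)%E.
Proof.
move=> iF.
transitivity (\int[P]_w (\sum_(q : Q) \sum_(i < n q) \sum_(j < n q) (F q i j w)%:E))%E.
  apply: eq_integral => w _; rewrite -sumEFin; apply: eq_bigr => q _.
  rewrite -sumEFin; apply: eq_bigr => i _; by rewrite -sumEFin.
rewrite integral_sum //; last first.
  move=> q; apply: integrable_sum => // i _; apply: integrable_sum => // j _; exact: iF.
apply: eq_bigr => q _; rewrite integral_sum //; last first.
  by move=> i; apply: integrable_sum => // j _; exact: iF.
by apply: eq_bigr => i _; rewrite integral_sum // => j; exact: iF.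
Qed.


Theorem theorem1 (R : realType) (d : measure_display) (Omega : measurableType d)
  (P : probability Omega R) (dX : measure_display) (X : measurableType dX)
  (Q : finType) (n : Q -> nat)
  (x : forall q : Q, 'I_(n q) -> Omega -> X)
  (r e c : forall q : Q, 'I_(n q) -> Omega -> R)
  (p : forall q : Q, 'I_(n q) -> Omega -> R)
  (pp : forall q : Q, 'I_(n q) -> 'I_(n q) -> Omega -> R)
  (f : X -> R) (l11 l10 l01 l00 : R -> R -> R) :
  (forall q, (0 < n q)%N) ->
  (* random variables *)
  (forall q i, measurable_fun setT (x q i)) ->
  (forall q i, measurable_fun setT (r q i)) ->
  (forall q i, measurable_fun setT (e q i)) ->
  (forall q i, measurable_fun setT (c q i)) ->
  (forall q i w, r q i w = 0 \/ r q i w = 1) ->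
  (forall q i w, e q i w = 0 \/ e q i w = 1) ->
  (forall q i w, c q i w = 0 \/ c q i w = 1) ->
  (* deterministic, measurable ranking model and pairwise loss functions *)
  measurable_fun setT f ->
  measurable_fun setT (fun uv : R * R => l11 uv.1 uv.2) ->
  measurable_fun setT (fun uv : R * R => l10 uv.1 uv.2) ->
  measurable_fun setT (fun uv : R * R => l01 uv.1 uv.2) ->
  measurable_fun setT (fun uv : R * R => l00 uv.1 uv.2) ->
  (* p_{q,i} = P{e_{q,i} = 1 | I_q},  p_{q,i,j} = P{e_{q,i} e_{q,j} = 1 | I_q} *)
  (forall q i, is_cond_exp P (info_sigma (r q) (x q)) (e q i) (p q i)) ->
  (forall q i j, is_cond_exp P (info_sigma (r q) (x q))
                   (fun w => e q i w * e q j w) (pp q i j)) ->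
  (* (1) examination hypothesis *)
  (forall q i w, c q i w = e q i w * r q i w) ->
  (* (2) positivity *)
  (forall q i, {ae P, forall w, 0 < p q i w}) ->
  (forall q i j, {ae P, forall w, 0 < pp q i j w}) ->
  (* the expectations involved exist (termwise) *)
  (forall q i j, P.-integrable setT (fun w =>
     (quadform (zvec l11 l10 l01 l00 (f (x q i w)) (f (x q j w)))
        (Amx (p q i w)^-1 (p q j w)^-1 (pp q i j w)^-1)
        (svec (c q i w) (c q j w)))%:E)) ->
  (forall q i j, P.-integrable setT (fun w =>
     (dotc (zvec l11 l10 l01 l00 (f (x q i w)) (f (x q j w)))
        (svec (r q i w) (r q j w)))%:E)) ->
  (\int[P]_w (\sum_(q : Q) \sum_(i < n q) \sum_(j < n q)
       quadform (zvec l11 l10 l01 l00 (f (x q i w)) (f (x q j w)))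
         (Amx (p q i w)^-1 (p q j w)^-1 (pp q i j w)^-1)
         (svec (c q i w) (c q j w)))%:E
   = \int[P]_w (\sum_(q : Q) \sum_(i < n q) \sum_(j < n q)
       dotc (zvec l11 l10 l01 l00 (f (x q i w)) (f (x q j w)))
         (svec (r q i w) (r q j w)))%:E)%E.
Proof.
move=> npos mx mr me mc r01 e01 c01 mf ml11 ml10 ml01 ml00 Hp Hpp hc pp0 ppp0 iQ iD.
rewrite integral_sum3 // integral_sum3 //.
apply: eq_bigr => q _; apply: eq_bigr => i _; apply: eq_bigr => j _.
pose gen := info_gen (r q) (x q).
have gen_meas : gen `<=` d.-measurable.
  move=> A [k [[B [mB ->]]|[B [mB ->]]]].
  - by rewrite -(setTI (_ @^-1` _)); exact: mr.
  - by rewrite -(setTI (_ @^-1` _)); exact: mx.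
have mT (h : Omega -> R) : (forall B, measurable B -> <<s gen>> (h @^-1` B)) ->
    measurable_fun [set: g_sigma_algebraType gen] (h : g_sigma_algebraType gen -> R).
  by move=> H _ B mB; rewrite setTI; exact: H.
have mxT k : measurable_fun [set: g_sigma_algebraType gen] (x q k : g_sigma_algebraType gen -> X).
  move=> _ B mB; rewrite setTI; apply: sub_gen_smallest.
  by exists k; right; exists B; split.
have mrT k : measurable_fun [set: g_sigma_algebraType gen] (r q k : g_sigma_algebraType gen -> R).
  move=> _ B mB; rewrite setTI; apply: sub_gen_smallest.
  by exists k; left; exists B; split.
have mfx k : measurable_fun [set: g_sigma_algebraType gen]
    ((fun w => f (x q k w)) : g_sigma_algebraType gen -> R).
  exact: measurableT_comp mf (mxT k).
have mpair : measurable_fun [set: g_sigma_algebraType gen]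
    ((fun w => (f (x q i w), f (x q j w))) : g_sigma_algebraType gen -> R * R).
  exact: measurable_fun_pair.
have [mpi [ipi Hpi]] := Hp q i.
have [mpj [ipj Hpj]] := Hp q j.
have [mpij [ipij Hpij]] := Hpp q i j.
have e01' k w : (0 <= e q k w <= 1)%R.
  by case: (e01 q k w) => ->; rewrite ?lexx ?ler01.
under eq_integral do rewrite quadformE !hc.
under [RHS]eq_integral do rewrite dotcE.
apply: (@term R d Omega P gen gen_meas (e q i) (e q j) (r q i) (r q j)
  (p q i) (p q j) (pp q i j)
  (fun w => l11 (f (x q i w)) (f (x q j w)))
  (fun w => l10 (f (x q i w)) (f (x q j w)))
  (fun w => l01 (f (x q i w)) (f (x q j w)))
  (fun w => l00 (f (x q i w)) (f (x q j w)))).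
- exact: me.
- exact: me.
- exact: e01.
- exact: e01.
- exact: mrT.
- exact: mrT.
- exact: measurableT_comp ml11 mpair.
- exact: measurableT_comp ml10 mpair.
- exact: measurableT_comp ml01 mpair.
- exact: measurableT_comp ml00 mpair.
- exact: mT.
- exact: mT.
- exact: mT.
- split => //; exact: bnd_int.
- split => //; exact: bnd_int.
- split => //; apply: bnd_int.
    exact: measurable_funM.
  move=> w; case: (e01 q i w) => ->; case: (e01 q j w) => ->;
    by rewrite ?mul0r ?mul1r ?lexx ?ler01.
- exact: pp0.
- exact: pp0.
- exact: ppp0.
- apply: eq_integrable (iQ q i j) => // w _.
  by rewrite quadformE !hc.
Qed.
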